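(* Let $\mathbf{T}\subset\mathbb{S}^3$ be a $\mathbb{Z}_2$-symmetric spherical tetrahedron with dihedral angles $A$, $B=E$, $C=F$, $D$ and edge lengths $l_A$, $l_B=l_E$, $l_C=l_F$, $l_D$. Put $a_+=\cos\frac{l_A+l_D}{2}$, $a_-=\cos\frac{l_A-l_D}{2}$, $b=\cos l_B$, $c=\cos l_C$, $\mathcal{A}_+=\cos\frac{A+D}{2}$, $\mathcal{A}_-=\cos\frac{D-A}{2}$, $\mathcal{B}=\cos B$, $\mathcal{C}=\cos C$. Then there exists a (symmetric) spherical tetrahedron $\mathbf{T}_s$, with dihedral angles $\alpha,\beta,\gamma$ (each appearing on a pair of opposite edges) and corresponding edge lengths $l_\alpha,l_\beta,l_\gamma$, whose Gram matrix is $$G_s=\begin{pmatrix}1&-\cos\alpha&-\cos\beta&-\cos\gamma\\-\cos\alpha&1&-\cos\gamma&-\cos\beta\\-\cos\beta&-\cos\gamma&1&-\cos\alpha\\-\cos\gamma&-\cos\beta&-\cos\alpha&1\end{pmatrix}=\begin{pmatrix}1&-\frac{\mathcal{A}_+}{\mathcal{A}_-}&-\frac{\mathcal{B}}{\mathcal{A}_-}&-\frac{\mathcal{C}}{\mathcal{A}_-}\\-\frac{\mathcal{A}_+}{\mathcal{A}_-}&1&-\frac{\mathcal{C}}{\mathcal{A}_-}&-\frac{\mathcal{B}}{\mathcal{A}_-}\\-\frac{\mathcal{B}}{\mathcal{A}_-}&-\frac{\mathcal{C}}{\mathcal{A}_-}&1&-\frac{\mathcal{A}_+}{\mathcal{A}_-}\\-\frac{\mathcal{C}}{\mathcal{A}_-}&-\frac{\mathcal{B}}{\mathcal{A}_-}&-\frac{\mathcal{A}_+}{\mathcal{A}_-}&1\end{pmatrix}$$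 and whose edge matrix is $$G^\star_s=\begin{pmatrix}1&\cos l_\alpha&\cos l_\beta&\cos l_\gamma\\\cos l_\alpha&1&\cos l_\gamma&\cos l_\beta\\\cos l_\beta&\cos l_\gamma&1&\cos l_\alpha\\\cos l_\gamma&\cos l_\beta&\cos l_\alpha&1\end{pmatrix}=\begin{pmatrix}1&\frac{a_+}{a_-}&\frac{b}{a_-}&\frac{c}{a_-}\\\frac{a_+}{a_-}&1&\frac{c}{a_-}&\frac{b}{a_-}\\\frac{b}{a_-}&\frac{c}{a_-}&1&\frac{a_+}{a_-}\\\frac{c}{a_-}&\frac{b}{a_-}&\frac{a_+}{a_-}&1\end{pmatrix}.$$
   Context: A spherical tetrahedron $\mathbf{T}\subset\mathbb{S}^3\subset\mathbb{R}^4$ is the intersection of $\mathbb{S}^3$ with the cone over four linearly independent unit vectors $\mathrm{p}_0,\dots,\mathrm{p}_3$. Edge lengths $l_{ij}\in[0,\pi]$: $\cos l_{ij}=\langle\mathrm{p}_i,\mathrm{p}_j\rangle$; dihedral angles $\alpha_{ij}\in[0,\pi]$: $\cos\alpha_{ij}=-\langle\mathrm{v}_i,\mathrm{v}_j\rangle$ with $\mathrm{v}_i$ the outer unit normal of the face opposite $\mathrm{p}_i$. The edge matrix of a tetrahedron is $(\langle\mathrm{p}_i,\mathrm{p}_j\rangle)_{i,j=0}^3$ and its Gram matrix is $(\langle\mathrm{v}_i,\mathrm{v}_j\rangle)_{i,j=0}^3$. Notation for $\mathbf{T}$: $l_A=l_{01}$, $l_B=l_{02}$, $l_C=l_{03}$,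 $l_D=l_{23}$, $l_E=l_{13}$, $l_F=l_{12}$; $A,\dots,F$ are the dihedral angles along the edges of lengths $l_A,\dots,l_F$. $\mathbf{T}$ is $\mathbb{Z}_2$-symmetric if invariant under rotation through $\pi$ about the axis through the midpoints of the edges $\mathrm{p}_0\mathrm{p}_1$ and $\mathrm{p}_2\mathrm{p}_3$ (so $l_B=l_E$, $l_C=l_F$, $B=E$, $C=F$). A tetrahedron is called symmetric if opposite edges have equal lengths (equivalently, equal dihedral angles). *)

(* Defs.v *)
From HB Require Import structures.
From mathcomp Require Import all_boot all_order all_algebra.
From mathcomp Require Import all_classical all_reals all_analysis.
Set Implicit Arguments. Unset Strict Implicit. Unset Printing Implicit Defensive.
Import Order.TTheory GRing.Theory Num.Theory.
Local Open Scope ring_scope.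

Definition dot {R : realType} (u v : 'rV[R]_4) : R := (u *m v^T) 0 0.

Definition rows_mx {R : realType} (p : 'I_4 -> 'rV[R]_4) : 'M[R]_4 :=
  \matrix_(i < 4, j < 4) p i 0 j.

Definition spherical_tetrahedron {R : realType} (p : 'I_4 -> 'rV[R]_4) : Prop :=
  (forall i, dot (p i) (p i) = 1) /\ row_free (rows_mx p).

Definition outer_normal {R : realType} (p : 'I_4 -> 'rV[R]_4) (i : 'I_4)
  (v : 'rV[R]_4) : Prop :=
  dot v v = 1 /\ (forall j, j != i -> dot v (p j) = 0) /\ dot v (p i) < 0.

Definition edge_matrix {R : realType} (p : 'I_4 -> 'rV[R]_4) : 'M[R]_4 :=
  \matrix_(i < 4, j < 4) dot (p i) (p j).

Definition is_gram_matrix {R : realType} (p : 'I_4 -> 'rV[R]_4) (G : 'M[R]_4) : Prop :=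
  exists v : 'I_4 -> 'rV[R]_4,
    (forall i, outer_normal p i (v i)) /\
    G = \matrix_(i < 4, j < 4) dot (v i) (v j).

Definition edge_length {R : realType} (p : 'I_4 -> 'rV[R]_4) (i j : 'I_4) : R :=
  acos (dot (p i) (p j)).

Definition dihedral_angle {R : realType} (v : 'I_4 -> 'rV[R]_4) (i j : 'I_4) : R :=
  acos (- dot (v i) (v j)).

(* Z2-symmetry: invariance under the rotation through pi about the axis through
   the midpoints of p0p1 and p2p3, i.e. an orthogonal map of R^4 exchanging
   p0 <-> p1 and p2 <-> p3 (since the p_i form a basis, such a map is unique and
   is exactly that rotation). *)
Definition Z2_symmetric {R : realType} (p : 'I_4 -> 'rV[R]_4) : Prop :=
  exists M : 'M[R]_4,
    M *m M^T = 1%:M /\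
    p 0 *m M = p 1 /\ p 1 *m M = p 0 /\
    p 2%:R *m M = p 3%:R /\ p 3%:R *m M = p 2%:R.

Definition sym_pattern {R : realType} (x y z : R) : 'M[R]_4 :=
  \matrix_(i < 4, j < 4)
    nth 0 (nth [::] [:: [:: 1; x; y; z];
                       [:: x; 1; z; y];
                       [:: y; z; 1; x];
                       [:: z; y; x; 1]] i) j.

(* Main.v *)
Require Import Defs.
From HB Require Import structures.
From mathcomp Require Import all_boot all_order all_algebra.
From mathcomp Require Import all_classical all_reals all_analysis.
From mathcomp Require Import ring lra.
Import Order.TTheory GRing.Theory Num.Theory.
Local Open Scope ring_scope.

Section H.
Context {R : realType}.
Implicit Types (u w x y : 'rV[R]_4).

Lemma dotC x y : dot x y = dot y x.
Proof.
rewrite /dot; have -> : y *m x^T = (x *m y^T)^T by rewrite trmx_mul trmxK.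
by rewrite [RHS]mxE.
Qed.

Lemma dotDl x y w : dot (x + y) w = dot x w + dot y w.
Proof. by rewrite /dot mulmxDl mxE. Qed.

Lemma dotNl x w : dot (- x) w = - dot x w.
Proof. by rewrite /dot mulNmx mxE. Qed.

Lemma dotDr x y w : dot w (x + y) = dot w x + dot w y.
Proof. by rewrite dotC dotDl !(dotC w). Qed.

Lemma dotNr x w : dot w (- x) = - dot w x.
Proof. by rewrite dotC dotNl dotC. Qed.

Lemma dotM (M : 'M[R]_4) x y : M *m M^T = 1%:M -> dot (x *m M) (y *m M) = dot x y.
Proof. by move=> hM; rewrite /dot trmx_mul mulmxA -(mulmxA x) hM mulmx1. Qed.

Lemma dot_rows (u w : 'I_4 -> 'rV[R]_4) i j :
  (rows_mx u *m (rows_mx w)^T) i j = dot (u i) (w j).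
Proof. by rewrite /dot !mxE; apply: eq_bigr => k _; rewrite !mxE. Qed.

Lemma dot_ge0 x : 0 <= dot x x.
Proof. by rewrite /dot mxE; apply: sumr_ge0 => k _; rewrite mxE -expr2 sqr_ge0. Qed.

Lemma dot_gt0 x : x != 0 -> 0 < dot x x.
Proof.
move=> nx; rewrite lt_def dot_ge0 andbT; apply: contra nx => /eqP h.
apply/eqP/matrixP => i k; rewrite (ord1 i) mxE.
have hk : x 0 k * x^T k 0 = 0.
  move: h; rewrite /dot mxE => /psumr_eq0P; apply => // j _.
  by rewrite mxE -expr2 sqr_ge0.
by move: hk; rewrite mxE => /eqP; rewrite mulf_eq0 orbb => /eqP.
Qed.

Lemma dot_cs x y : dot x x = 1 -> dot y y = 1 -> -1 <= dot x y <= 1.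
Proof.
move=> hx hy.
have h1 := dot_ge0 (x + y); have h2 := dot_ge0 (x - y).
move: h1 h2; rewrite !dotDl !dotDr !dotNl !dotNr hx hy (dotC y x).
move=> h1 h2; apply/andP; split; lra.
Qed.

Lemma half_cs (t : R) : -1 <= t <= 1 ->
  cos (acos t / 2) = Num.sqrt ((1 + t) / 2) /\ sin (acos t / 2) = Num.sqrt ((1 - t) / 2).
Proof.
move=> ht.
have a0 := acos_ge0 ht; have api := acos_lepi ht; have pi0 : (0 : R) < pi by exact: pi_gt0.
set x := acos t / 2.
have hc : cos (x + x) = t by rewrite /x -splitr acosK // in_itv.
rewrite cosD in hc.
have hcs := cos2Dsin2 x.
have c0 : 0 <= cos x by apply: cos_ge0_pihalf; apply/andP; split; rewrite /x; lra.
have s0 : 0 <= sin x by apply: sin_ge0_pi; apply/andP; split; rewrite /x; lra.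
have -> : (1 + t) / 2 = cos x ^+ 2 by rewrite -hc; move: hcs; rewrite !expr2 => hcs; lra.
have -> : (1 - t) / 2 = sin x ^+ 2 by rewrite -hc; move: hcs; rewrite !expr2 => hcs; lra.
by rewrite !sqrtr_sqr !ger0_norm.
Qed.

Lemma hval (h K : R) : h < 0 -> 0 < K -> h * K * h = 1 -> h = - (Num.sqrt K)^-1.
Proof.
move=> hh hK e.
have s0 : 0 < Num.sqrt K by rewrite sqrtr_gt0.
have sK : Num.sqrt K ^+ 2 = K by rewrite sqr_sqrtr // ltW.
have : (h * Num.sqrt K) ^+ 2 = 1 by rewrite exprMn sK -e; ring.
move/eqP; rewrite sqrf_eq1 => /orP [/eqP h1|/eqP h1].
  have : h * Num.sqrt K < 0 by rewrite pmulr_llt0.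
  by rewrite h1 ltr10.
apply: (@mulIf _ (Num.sqrt K)); first by rewrite gt_eqF.
by rewrite h1 mulNr mulVf // gt_eqF.
Qed.

Lemma sq_eq (u v : R) : 0 <= u -> 0 <= v -> u ^+ 2 = v ^+ 2 -> u = v.
Proof. by move=> hu hv e; apply/eqP; rewrite -(@eqrXn2 _ 2) // e. Qed.

End H.

Lemma ord4_ind (P : 'I_4 -> Prop) : P 0 -> P 1 -> P 2%:R -> P 3%:R -> forall i, P i.
Proof.
move=> H0 H1 H2 H3 [[|[|[|[|//]]]] Hi].
- by rewrite (_ : Ordinal Hi = 0) //; apply/val_inj.
- by rewrite (_ : Ordinal Hi = 1) //; apply/val_inj.
- by rewrite (_ : Ordinal Hi = 2%:R) //; apply/val_inj.
- by rewrite (_ : Ordinal Hi = 3%:R) //; apply/val_inj.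
Qed.

Definition chi {R : ringType} (k i : 'I_4) : R :=
  nth 0 (nth [::] [:: [:: 1; 1; 1; 1]; [:: 1; 1; -1; -1];
                      [:: 1; -1; 1; -1]; [:: 1; -1; -1; 1]] k) i.
Definition nth4 {R : ringType} (a0 a1 a2 a3 : R) (k : 'I_4) : R :=
  nth 0 [:: a0; a1; a2; a3] k.

Lemma build_sym (R : realType) (s0 s1 s2 s3 N : R) :
  0 < s0 -> 0 < s1 -> 0 < s2 -> 0 < s3 -> 0 < N ->
  N ^+ 2 = s0 ^-2 + s1 ^-2 + s2 ^-2 + s3 ^-2 ->
  s0 ^+ 2 + s1 ^+ 2 + s2 ^+ 2 + s3 ^+ 2 = 4 ->
  exists q : 'I_4 -> 'rV[R]_4,
    spherical_tetrahedron q /\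
    is_gram_matrix q (sym_pattern
       ((s0 ^-2 + s1 ^-2 - s2 ^-2 - s3 ^-2) / N ^+ 2)
       ((s0 ^-2 - s1 ^-2 + s2 ^-2 - s3 ^-2) / N ^+ 2)
       ((s0 ^-2 - s1 ^-2 - s2 ^-2 + s3 ^-2) / N ^+ 2)) /\
    edge_matrix q = sym_pattern
       ((s0 ^+2 + s1 ^+2 - s2 ^+2 - s3 ^+2) / 4)
       ((s0 ^+2 - s1 ^+2 + s2 ^+2 - s3 ^+2) / 4)
       ((s0 ^+2 - s1 ^+2 - s2 ^+2 + s3 ^+2) / 4).
Proof.
move=> h0 h1 h2 h3 hN hN2 hs.
have n0 : s0 != 0 by rewrite gt_eqF.
have n1 : s1 != 0 by rewrite gt_eqF.
have n2 : s2 != 0 by rewrite gt_eqF.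
have n3 : s3 != 0 by rewrite gt_eqF.
have nN : N != 0 by rewrite gt_eqF.
pose q := fun i : 'I_4 => \row_k (nth4 s0 s1 s2 s3 k * chi k i / 2) : 'rV[R]_4.
pose w := fun i : 'I_4 => \row_k (- (chi k i / nth4 s0 s1 s2 s3 k) / N) : 'rV[R]_4.
have dotE (u v : 'rV[R]_4) : dot u v = \sum_k u 0 k * v 0 k.
  by rewrite /dot !mxE; apply: eq_bigr => k _; rewrite !mxE.
have eN : (s0^-2+s1^-2+s2^-2+s3^-2)/N^+2 = 1 :> R.
  by rewrite -hN2 divff // expf_neq0.
have neg2N : forall x : R, x = -(2/N) -> x < 0.
  by move=> x ->; rewrite oppr_lt0 divr_gt0.
have e1 : forall x : R, x = (s0^+2+s1^+2+s2^+2+s3^+2)/4 -> x = 1.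
  by move=> x ->; rewrite hs; field.
exists q; split; [split|split].
{ have e : (s0^+2+s1^+2+s2^+2+s3^+2)/4 = 1 :> R.
    by rewrite hs; field.
  apply: ord4_ind; rewrite dotE !big_ord_recr big_ord0 /= !mxE /chi /nth4 /= -[RHS]e; field; rewrite ?n0 ?n1 ?n2 ?n3 ?nN ?hN2 //. }
{ apply/row_freeP.
  pose B := \matrix_(k < 4, j < 4) (chi k j / (2 * nth4 s0 s1 s2 s3 k)) : 'M[R]_4.
  exists B.
  apply/matrixP => i j; move: i j; apply: ord4_ind; apply: ord4_ind;
    rewrite !mxE !big_ord_recr big_ord0 /= !mxE /chi /nth4 /=; field; rewrite ?n0 ?n1 ?n2 ?n3 ?nN ?hN2 //. }
{ exists w; split.
  { move=> i; split; last split.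
    { move: i; apply: ord4_ind; rewrite dotE !big_ord_recr big_ord0 /= !mxE /chi /nth4 /=;
      rewrite -[RHS]eN; field; rewrite ?n0 ?n1 ?n2 ?n3 ?nN ?hN2 //. }
    { move: i; apply: ord4_ind; apply: ord4_ind => //= _;
      rewrite dotE !big_ord_recr big_ord0 /= !mxE /chi /nth4 /=; field; rewrite ?n0 ?n1 ?n2 ?n3 ?nN ?hN2 //. }
    { move: i; apply: ord4_ind;
      rewrite dotE !big_ord_recr big_ord0 /= !mxE /chi /nth4 /=;
      apply: neg2N; field; rewrite ?n0 ?n1 ?n2 ?n3 ?nN //. } }
  apply/matrixP => i j; move: i j; apply: ord4_ind; apply: ord4_ind;
    rewrite !mxE dotE !big_ord_recr big_ord0 /= !mxE /chi /nth4 /=; rewrite -?[LHS]eN; field; rewrite ?n0 ?n1 ?n2 ?n3 ?nN //. }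
apply/matrixP => i j; move: i j; apply: ord4_ind; apply: ord4_ind;
    rewrite !mxE dotE !big_ord_recr big_ord0 /= !mxE /chi /nth4 /=; try apply: e1; field; rewrite ?n0 ?n1 ?n2 ?n3 ?nN //.
Qed.

Section S.
Context {R : realType}.
Definition Gm (a d b c : R) : 'M[R]_4 := \matrix_(i < 4, j < 4)
  nth 0 (nth [::] [:: [:: 1; a; b; c]; [:: a; 1; c; b]; [:: b; c; 1; d]; [:: c; b; d; 1]] i) j.
Definition D1 (a d b c : R) := (2+2*a)*(2+2*d) - (2*(b+c))^+2.
Definition D2 (a d b c : R) := (2-2*a)*(2-2*d) - (2*(b-c))^+2.
Definition Km (a d b c : R) : 'M[R]_4 :=
  let S0 := (2+2*d)/D1 a d b c + (2-2*d)/D2 a d b c in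
  let K01 := (2+2*d)/D1 a d b c - (2-2*d)/D2 a d b c in
  let S2 := (2+2*a)/D1 a d b c + (2-2*a)/D2 a d b c in
  let K23 := (2+2*a)/D1 a d b c - (2-2*a)/D2 a d b c in
  let K02 := - ((2*(b+c))/D1 a d b c + (2*(b-c))/D2 a d b c) in
  let K03 := - ((2*(b+c))/D1 a d b c) + (2*(b-c))/D2 a d b c in
  \matrix_(i < 4, j < 4)
  nth 0 (nth [::] [:: [:: S0; K01; K02; K03]; [:: K01; S0; K03; K02];
                      [:: K02; K03; S2; K23]; [:: K03; K02; K23; S2]] i) j.
Lemma KG a d b c : D1 a d b c != 0 -> D2 a d b c != 0 -> Km a d b c *m Gm a d b c = 1%:M.
Proof.
move=> n1 n2; apply/matrixP => i j; move: i j; apply: ord4_ind; apply: ord4_ind;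
  rewrite !mxE !big_ord_recr big_ord0 /= !mxE /=;
  move: n1 n2; rewrite /D1 /D2 => n1 n2; field; by rewrite n1 n2.
Qed.
End S.

Lemma core (R : realType) (r r' Z Z' Q am ap bb cc Am Ap cB cC : R) :
  0 < r -> 0 < r' -> Z ^+ 2 < r ^+ 2 -> Z' ^+ 2 < r' ^+ 2 -> 0 < Q ->
  am = (r + r') / 4 -> ap = (r - r') / 4 -> bb = (Z + Z') / 4 -> cc = (Z - Z') / 4 ->
  Am = r' / ((r' ^+ 2 - Z' ^+ 2) * Q) + r / ((r ^+ 2 - Z ^+ 2) * Q) ->
  Ap = r' / ((r' ^+ 2 - Z' ^+ 2) * Q) - r / ((r ^+ 2 - Z ^+ 2) * Q) ->
  cB = (Z / (r ^+ 2 - Z ^+ 2) + Z' / (r' ^+ 2 - Z' ^+ 2)) / Q ->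
  cC = (Z / (r ^+ 2 - Z ^+ 2) - Z' / (r' ^+ 2 - Z' ^+ 2)) / Q ->
  let l0 := 1 + ap / am + bb / am + cc / am in
  let l1 := 1 + ap / am - bb / am - cc / am in
  let l2 := 1 - ap / am + bb / am - cc / am in
  let l3 := 1 - ap / am - bb / am + cc / am in
  (0 < l0 /\ 0 < l1 /\ 0 < l2 /\ 0 < l3) /\
  (- (Ap / Am) = (l0^-1 + l1^-1 - l2^-1 - l3^-1) / (l0^-1 + l1^-1 + l2^-1 + l3^-1) /\
   - (cB / Am) = (l0^-1 - l1^-1 + l2^-1 - l3^-1) / (l0^-1 + l1^-1 + l2^-1 + l3^-1) /\
   - (cC / Am) = (l0^-1 - l1^-1 - l2^-1 + l3^-1) / (l0^-1 + l1^-1 + l2^-1 + l3^-1)).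
Proof.
move=> hr hr' hZ hZ' hQ -> -> -> -> -> -> -> -> l0 l1 l2 l3.
have rZ1 : 0 < r + Z by nra.
have rZ2 : 0 < r - Z by nra.
have rZ3 : 0 < r' + Z' by nra.
have rZ4 : 0 < r' - Z' by nra.
have rr : 0 < r + r' by lra.
have nrr : r + r' != 0 by rewrite gt_eqF.
have nQ : Q != 0 by rewrite gt_eqF.
have D1 : 0 < r ^+ 2 - Z ^+ 2 by rewrite subr_gt0.
have D2 : 0 < r' ^+ 2 - Z' ^+ 2 by rewrite subr_gt0.
have nD1 : r ^+ 2 - Z ^+ 2 != 0 by rewrite gt_eqF.
have nD2 : r' ^+ 2 - Z' ^+ 2 != 0 by rewrite gt_eqF.
have e0 : l0 = 2 * (r + Z) / (r + r') by rewrite /l0; field.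
have e1 : l1 = 2 * (r - Z) / (r + r') by rewrite /l1; field.
have e2 : l2 = 2 * (r' + Z') / (r + r') by rewrite /l2; field.
have e3 : l3 = 2 * (r' - Z') / (r + r') by rewrite /l3; field.
rewrite e0 e1 e2 e3.
set P := r / (r ^+ 2 - Z ^+ 2). set P' := r' / (r' ^+ 2 - Z' ^+ 2).
have n1 : r + Z != 0 by rewrite gt_eqF.
have n2 : r - Z != 0 by rewrite gt_eqF.
have n3 : r' + Z' != 0 by rewrite gt_eqF.
have n4 : r' - Z' != 0 by rewrite gt_eqF.
have PP : 0 < P + P' by rewrite /P /P' addr_gt0 // divr_gt0.
have nPP : P + P' != 0 by rewrite gt_eqF.
have f01 : (2 * (r + Z) / (r + r'))^-1 + (2 * (r - Z) / (r + r'))^-1 = (r + r') * P.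
  by rewrite /P; field; rewrite ?nD1 ?nD2 ?nrr ?nQ ?n1 ?n2 ?n3 ?n4.
have f23 : (2 * (r' + Z') / (r + r'))^-1 + (2 * (r' - Z') / (r + r'))^-1 = (r + r') * P'.
  by rewrite /P'; field; rewrite ?nD1 ?nD2 ?nrr ?nQ ?n1 ?n2 ?n3 ?n4.
have g01 : (2 * (r + Z) / (r + r'))^-1 - (2 * (r - Z) / (r + r'))^-1 = - ((r + r') * (Z / (r ^+ 2 - Z ^+ 2))).
  by field; rewrite ?nD1 ?nD2 ?nrr ?nQ ?n1 ?n2 ?n3 ?n4.
have g23 : (2 * (r' + Z') / (r + r'))^-1 - (2 * (r' - Z') / (r + r'))^-1 = - ((r + r') * (Z' / (r' ^+ 2 - Z' ^+ 2))).
  by field; rewrite ?nD1 ?nD2 ?nrr ?nQ ?n1 ?n2 ?n3 ?n4.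
split; first by rewrite !divr_gt0 ?mulr_gt0.
set i0 := (2 * (r + Z) / (r + r'))^-1.
set i1 := (2 * (r - Z) / (r + r'))^-1.
set i2 := (2 * (r' + Z') / (r + r'))^-1.
set i3 := (2 * (r' - Z') / (r + r'))^-1.
have -> : i0 + i1 + i2 + i3 = (r + r') * (P + P').
  have -> : i0 + i1 + i2 + i3 = (i0 + i1) + (i2 + i3) by ring.
  by rewrite f01 f23; ring.
have -> : i0 + i1 - i2 - i3 = (r + r') * (P - P').
  have -> : i0 + i1 - i2 - i3 = (i0 + i1) - (i2 + i3) by ring.
  by rewrite f01 f23; ring.
have -> : i0 - i1 + i2 - i3 = - ((r + r') * (Z / (r ^+ 2 - Z ^+ 2) + Z' / (r' ^+ 2 - Z' ^+ 2))).
  have -> : i0 - i1 + i2 - i3 = (i0 - i1) + (i2 - i3) by ring.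
  by rewrite g01 g23; ring.
have -> : i0 - i1 - i2 + i3 = - ((r + r') * (Z / (r ^+ 2 - Z ^+ 2) - Z' / (r' ^+ 2 - Z' ^+ 2))).
  have -> : i0 - i1 - i2 + i3 = (i0 - i1) - (i2 - i3) by ring.
  by rewrite g01 g23; ring.
move: nPP; rewrite /P /P' => nPP.
have nRR : r * (r' ^+ 2 - Z' ^+ 2) + r' * (r ^+ 2 - Z ^+ 2) != 0.
  by rewrite gt_eqF // addr_gt0 // mulr_gt0.
by split; last split; field; rewrite ?nD1 ?nD2 ?nrr ?nQ ?n1 ?n2 ?n3 ?n4 ?nRR.
Qed.


Definition Qf {R : realType} (a d b c c0 c1 c2 c3 : R) :=
  c0 ^+ 2 + c1 ^+ 2 + c2 ^+ 2 + c3 ^+ 2 + 2 * a * c0 * c1 + 2 * d * c2 * c3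
  + 2 * b * (c0 * c2 + c1 * c3) + 2 * c * (c0 * c3 + c1 * c2).

Lemma quadE (R : realType) (a d b c c0 c1 c2 c3 : R) :
  ((\row_k nth4 c0 c1 c2 c3 k) *m Gm a d b c *m (\row_k nth4 c0 c1 c2 c3 k)^T) 0 0
  = Qf a d b c c0 c1 c2 c3.
Proof.
rewrite !mxE !big_ord_recr big_ord0 /= !mxE !big_ord_recr !big_ord0 /= !mxE /= /Qf /nth4 /=.
ring.
Qed.

Lemma aux_h (R : realType) (s k : R) : s != 0 -> - (s^-1) * k * - (s^-1) = k / s ^+ 2.
Proof. by move=> hs; field. Qed.

Lemma aux_h2 (R : realType) (s t k : R) : s != 0 -> t != 0 ->
  - (s^-1) * k * - (t^-1) = k / (s * t).
Proof. by move=> hs ht; field; rewrite hs ht. Qed.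

Lemma range_neg (R : realType) (x : R) : -1 <= x <= 1 -> -1 <= - x <= 1.
Proof. by move=> /andP [h1 h2]; apply/andP; split; lra. Qed.


Lemma rng2 (R : realType) (x : R) : 0 < 2 + 2 * x -> 0 < 2 - 2 * x -> -1 <= x <= 1.
Proof. by move=> h1 h2; apply/andP; split; lra. Qed.

Lemma half_pos (R : realType) (x : R) : 0 < 2 + 2 * x -> 0 < (1 + x) / 2.
Proof. by move=> h; lra. Qed.

Lemma half_neg (R : realType) (x : R) : 0 < 2 - 2 * x -> 0 < (1 - x) / 2.
Proof. by move=> h; lra. Qed.

Lemma rng_half (R : realType) (x : R) : -1 <= x <= 1 -> 0 <= (1 + x) / 2 /\ 0 <= (1 - x) / 2.
Proof. by move=> /andP [h1 h2]; split; lra. Qed.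

Theorem lemma4 (R : realType) (p v : 'I_4 -> 'rV[R]_4) :
  spherical_tetrahedron p ->
  (forall i, outer_normal p i (v i)) ->
  Z2_symmetric p ->
  let lA := edge_length p 0 1 in
  let lD := edge_length p 2%:R 3%:R in
  let lB := edge_length p 0 2%:R in
  let lC := edge_length p 0 3%:R in
  (* A, D, B, C: dihedral angles along the edges p0p1, p2p3, p0p2, p0p3 *)
  let A := dihedral_angle v 2%:R 3%:R in
  let D := dihedral_angle v 0 1 in
  let B := dihedral_angle v 1 3%:R in
  let C := dihedral_angle v 1 2%:R in
  let ap := cos ((lA + lD) / 2) in
  let am := cos ((lA - lD) / 2) in
  let b := cos lB in
  let c := cos lC in
  let Ap := cos ((A + D) / 2) in
  let Am := cos ((D - A) / 2) in
  let cB := cos B in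
  let cC := cos C in
  exists q : 'I_4 -> 'rV[R]_4,
    spherical_tetrahedron q /\
    is_gram_matrix q (sym_pattern (- (Ap / Am)) (- (cB / Am)) (- (cC / Am))) /\
    edge_matrix q = sym_pattern (ap / am) (b / am) (c / am).
Proof.
move=> [punit Pfree] Hv [M [HM [H01 [H10 [H23 H32]]]]].
move=> lA lD lB lC A D B C ap am b c Ap Am cB cC.
pose a0 := dot (p 0) (p 1). pose dl := dot (p 2%:R) (p 3%:R).
pose bb := dot (p 0) (p 2%:R). pose cc := dot (p 0) (p 3%:R).
have h13 : dot (p 1) (p 3%:R) = bb by rewrite -H01 -H23 (dotM _ _ _ HM).
have h12 : dot (p 1) (p 2%:R) = cc by rewrite -H01 -H32 (dotM _ _ _ HM).
have G : rows_mx p *m (rows_mx p)^T = Gm a0 dl bb cc.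
  apply/matrixP => i j; rewrite dot_rows; move: i j; apply: ord4_ind; apply: ord4_ind;
  rewrite /Gm mxE /=; first [ by rewrite punit | done | by rewrite dotC
    | by rewrite h13 | by rewrite h12 | by rewrite dotC h13 | by rewrite dotC h12 ].
have Pu : rows_mx p \in unitmx by rewrite -row_free_unit.
have quad : forall c0 c1 c2 c3 : R, (c0 != 0) || (c2 != 0) ->
    0 < Qf a0 dl bb cc c0 c1 c2 c3.
  move=> c0 c1 c2 c3 hc; rewrite -quadE -G.
  set x := \row_k nth4 c0 c1 c2 c3 k.
  have nx : x *m rows_mx p != 0.
    apply/negP => /eqP e.
    have x0 : x = 0 by rewrite -(mulmxK Pu x) e mul0mx.
    have e0 := congr1 (fun m : 'rV[R]_4 => m 0 0) x0.
    have e2 := congr1 (fun m : 'rV[R]_4 => m 0 2%:R) x0.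
    move: e0 e2; rewrite /x !mxE /nth4 /= => e0 e2.
    by move: hc; rewrite e0 e2 eqxx.
  by move: (dot_gt0 _ nx); rewrite /dot trmx_mul !mulmxA.
have o1 : (1 : R) != 0 := oner_neq0 R.
have hX : 0 < 2 + 2 * a0.
  by move: (quad 1 1 0 0); rewrite o1 /Qf => /(_ isT); lra.
have hX' : 0 < 2 - 2 * a0.
  by move: (quad 1 (-1) 0 0); rewrite o1 /Qf => /(_ isT); lra.
have hY : 0 < 2 + 2 * dl.
  by move: (quad 0 0 1 1); rewrite o1 orbT /Qf => /(_ isT); lra.
have hY' : 0 < 2 - 2 * dl.
  by move: (quad 0 0 1 (-1)); rewrite o1 orbT /Qf => /(_ isT); lra.
have hb1 : 0 < 2 + 2 * bb.
  by move: (quad 1 0 1 0); rewrite o1 /Qf => /(_ isT); lra.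
have hb2 : 0 < 2 - 2 * bb.
  by move: (quad 1 0 (-1) 0); rewrite o1 /Qf => /(_ isT); lra.
have hc1 : 0 < 2 + 2 * cc.
  by move: (quad 1 0 0 1); rewrite o1 /Qf => /(_ isT); lra.
have hc2 : 0 < 2 - 2 * cc.
  by move: (quad 1 0 0 (-1)); rewrite o1 /Qf => /(_ isT); lra.
have hD : 0 < D1 a0 dl bb cc.
  have := quad (2 + 2 * dl) (2 + 2 * dl) (- (2 * (bb + cc))) (- (2 * (bb + cc))).
  rewrite gt_eqF //= => /(_ isT).
  have -> : Qf a0 dl bb cc (2 + 2 * dl) (2 + 2 * dl) (- (2 * (bb + cc))) (- (2 * (bb + cc)))
     = (2 + 2 * dl) * D1 a0 dl bb cc by rewrite /Qf /D1; ring.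
  by rewrite pmulr_rgt0.
have hD' : 0 < D2 a0 dl bb cc.
  have := quad (2 - 2 * dl) (- (2 - 2 * dl)) (- (2 * (bb - cc))) (2 * (bb - cc)).
  rewrite gt_eqF //= => /(_ isT).
  have -> : Qf a0 dl bb cc (2 - 2 * dl) (- (2 - 2 * dl)) (- (2 * (bb - cc))) (2 * (bb - cc))
     = (2 - 2 * dl) * D2 a0 dl bb cc by rewrite /Qf /D2; ring.
  by rewrite pmulr_rgt0.
have nD : D1 a0 dl bb cc != 0 by rewrite gt_eqF.
have nD' : D2 a0 dl bb cc != 0 by rewrite gt_eqF.
pose hr := \row_i dot (v i) (p i) : 'rV[R]_4.
have VP : rows_mx v *m (rows_mx p)^T = diag_mx hr.
  apply/matrixP => i j; rewrite dot_rows mxE; case: (eqVneq i j) => [<-|nij].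
    by rewrite mxE mulr1n.
  by rewrite mulr0n (Hv i).2.1 // eq_sym.
have KGe := KG _ _ _ _ nD nD'.
have EV : rows_mx v = diag_mx hr *m Km a0 dl bb cc *m rows_mx p.
  have PTu : (rows_mx p)^T \in unitmx by rewrite unitmx_tr.
  apply/eqP; rewrite -subr_eq0; apply/eqP.
  rewrite -[LHS](mulmxK PTu) mulmxBl VP -(mulmxA _ (rows_mx p)) G.
  by rewrite -(mulmxA (diag_mx hr)) KGe mulmx1 subrr mul0mx.
have VV : forall i j, dot (v i) (v j) = hr 0 i * Km a0 dl bb cc j i * hr 0 j.
  move=> i j; rewrite -dot_rows.
  have -> : rows_mx v *m (rows_mx v)^T = diag_mx hr *m (Km a0 dl bb cc)^T *m diag_mx hr.
    rewrite EV !trmx_mul tr_diag_mx !mulmxA -(mulmxA _ (rows_mx p)) G.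
    by rewrite -(mulmxA (diag_mx hr)) KGe mulmx1.
  by rewrite mul_mx_diag mxE mul_diag_mx !mxE.
pose X := 2 + 2 * a0. pose X' := 2 - 2 * a0.
pose Y := 2 + 2 * dl. pose Y' := 2 - 2 * dl.
pose Z := 2 * (bb + cc). pose Z' := 2 * (bb - cc).
pose Dd := D1 a0 dl bb cc. pose Dd' := D2 a0 dl bb cc.
pose S0 := Y / Dd + Y' / Dd'. pose S2 := X / Dd + X' / Dd'.
have K00 : Km a0 dl bb cc 0 0 = S0 by rewrite /Km mxE.
have K11 : Km a0 dl bb cc 1 1 = S0 by rewrite /Km mxE.
have K22 : Km a0 dl bb cc 2%:R 2%:R = S2 by rewrite /Km mxE.
have K33 : Km a0 dl bb cc 3%:R 3%:R = S2 by rewrite /Km mxE.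
have K10 : Km a0 dl bb cc 1 0 = Y / Dd - Y' / Dd' by rewrite /Km mxE.
have K32 : Km a0 dl bb cc 3%:R 2%:R = X / Dd - X' / Dd' by rewrite /Km mxE.
have K31 : Km a0 dl bb cc 3%:R 1 = - (Z / Dd + Z' / Dd') by rewrite /Km mxE.
have K21 : Km a0 dl bb cc 2%:R 1 = - (Z / Dd) + Z' / Dd' by rewrite /Km mxE.
have S0p : 0 < S0 by rewrite addr_gt0 // divr_gt0.
have S2p : 0 < S2 by rewrite addr_gt0 // divr_gt0.
have hneg i : hr 0 i < 0 by rewrite mxE; exact: (Hv i).2.2.
have hunit i : hr 0 i * Km a0 dl bb cc i i * hr 0 i = 1 by rewrite -VV; exact: (Hv i).1.
have h0 : hr 0 0 = - (Num.sqrt S0)^-1.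
  by apply: hval (hneg 0) S0p _; rewrite -K00; exact: hunit.
have h1 : hr 0 1 = - (Num.sqrt S0)^-1.
  by apply: hval (hneg 1) S0p _; rewrite -K11; exact: hunit.
have h2 : hr 0 2%:R = - (Num.sqrt S2)^-1.
  by apply: hval (hneg 2%:R) S2p _; rewrite -K22; exact: hunit.
have h3 : hr 0 3%:R = - (Num.sqrt S2)^-1.
  by apply: hval (hneg 3%:R) S2p _; rewrite -K33; exact: hunit.
have sS0p : 0 < Num.sqrt S0 by rewrite sqrtr_gt0.
have sS2p : 0 < Num.sqrt S2 by rewrite sqrtr_gt0.
have nsS0 : Num.sqrt S0 != 0 by rewrite gt_eqF.
have nsS2 : Num.sqrt S2 != 0 by rewrite gt_eqF.
have v01 : dot (v 0) (v 1) = (Y / Dd - Y' / Dd') / S0.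
  by rewrite VV h0 h1 K10 aux_h // sqr_sqrtr // ltW.
have v23 : dot (v 2%:R) (v 3%:R) = (X / Dd - X' / Dd') / S2.
  by rewrite VV h2 h3 K32 aux_h // sqr_sqrtr // ltW.
pose Q := Num.sqrt S0 * Num.sqrt S2.
have v13 : dot (v 1) (v 3%:R) = - (Z / Dd + Z' / Dd') / Q.
  by rewrite VV h1 h3 K31 aux_h2.
have v12 : dot (v 1) (v 2%:R) = (- (Z / Dd) + Z' / Dd') / Q.
  by rewrite VV h1 h2 K21 aux_h2.
have ra0 := rng2 _ _ hX hX'.
have rdl := rng2 _ _ hY hY'.
have rbb := rng2 _ _ hb1 hb2.
have rcc := rng2 _ _ hc1 hc2.
have rD := range_neg _ _ (dot_cs _ _ (Hv 0).1 (Hv 1).1).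
have rA := range_neg _ _ (dot_cs _ _ (Hv 2%:R).1 (Hv 3%:R).1).
have rB := range_neg _ _ (dot_cs _ _ (Hv 1).1 (Hv 3%:R).1).
have rC := range_neg _ _ (dot_cs _ _ (Hv 1).1 (Hv 2%:R).1).
have [Hca Hsa] := half_cs _ ra0.
have [Hcd Hsd] := half_cs _ rdl.
have [HcD HsD] := half_cs _ rD.
have [HcA HsA] := half_cs _ rA.
set ca := Num.sqrt ((1 + a0) / 2) in Hca.
set sa := Num.sqrt ((1 - a0) / 2) in Hsa.
set cd := Num.sqrt ((1 + dl) / 2) in Hcd.
set sd := Num.sqrt ((1 - dl) / 2) in Hsd.
set cD := Num.sqrt ((1 + - dot (v 0) (v 1)) / 2) in HcD.
set sD := Num.sqrt ((1 - - dot (v 0) (v 1)) / 2) in HsD.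
set cA := Num.sqrt ((1 + - dot (v 2%:R) (v 3%:R)) / 2) in HcA.
set sA := Num.sqrt ((1 - - dot (v 2%:R) (v 3%:R)) / 2) in HsA.
have Eam : am = ca * cd + sa * sd.
  by rewrite /am /lA /lD /edge_length -/a0 -/dl mulrBl cosB Hca Hsa Hcd Hsd.
have Eap : ap = ca * cd - sa * sd.
  by rewrite /ap /lA /lD /edge_length -/a0 -/dl mulrDl cosD Hca Hsa Hcd Hsd.
have Eb : b = bb by rewrite /b /lB /edge_length -/bb acosK // in_itv.
have Ec : c = cc by rewrite /c /lC /edge_length -/cc acosK // in_itv.
have EAp : Ap = cA * cD - sA * sD.
  by rewrite /Ap /A /D /dihedral_angle mulrDl cosD HcA HsA HcD HsD.
have EAm : Am = cD * cA + sD * sA.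
  by rewrite /Am /A /D /dihedral_angle mulrBl cosB HcA HsA HcD HsD.
have EcB : cB = - dot (v 1) (v 3%:R) by rewrite /cB /B /dihedral_angle acosK // in_itv.
have EcC : cC = - dot (v 1) (v 2%:R) by rewrite /cC /C /dihedral_angle acosK // in_itv.
pose r := 4 * ca * cd. pose r' := 4 * sa * sd.
have ca0 : 0 < ca by rewrite sqrtr_gt0 half_pos.
have sa0 : 0 < sa by rewrite sqrtr_gt0 half_neg.
have cd0 : 0 < cd by rewrite sqrtr_gt0 half_pos.
have sd0 : 0 < sd by rewrite sqrtr_gt0 half_neg.
have hrp : 0 < r by rewrite /r !mulr_gt0.
have hrp' : 0 < r' by rewrite /r' !mulr_gt0.
have hr2 : r ^+ 2 = X * Y.
  by rewrite /r !exprMn /ca /cd !sqr_sqrtr ?ltW ?half_pos // /X /Y; field.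
have hr'2 : r' ^+ 2 = X' * Y'.
  by rewrite /r' !exprMn /sa /sd !sqr_sqrtr ?ltW ?half_neg // /X' /Y'; field.
have hDd : Dd = r ^+ 2 - Z ^+ 2 by rewrite hr2.
have hDd' : Dd' = r' ^+ 2 - Z' ^+ 2 by rewrite hr'2.
have hQ : 0 < Q by rewrite /Q mulr_gt0.
have nQ : Q != 0 by rewrite gt_eqF.
have hQ2 : Q ^+ 2 = S0 * S2 by rewrite /Q exprMn !sqr_sqrtr // ltW.
have [rD2 rD3] := rng_half _ _ rD.
have [rA2 rA3] := rng_half _ _ rA.
have nS0 : S0 != 0 by rewrite gt_eqF.
have nS2 : S2 != 0 by rewrite gt_eqF.
have hDp : 0 < Dd := hD.
have hDp' : 0 < Dd' := hD'.
have nXX : X * Dd' + X' * Dd != 0 by rewrite gt_eqF // addr_gt0 // mulr_gt0.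
have nYY : Y * Dd' + Y' * Dd != 0 by rewrite gt_eqF // addr_gt0 // mulr_gt0.
have PD : cD * cA = r' / (Dd' * Q).
  apply: sq_eq; first by rewrite mulr_ge0 ?sqrtr_ge0.
    by rewrite divr_ge0 ?ltW // mulr_gt0.
  rewrite exprMn /cD /cA !sqr_sqrtr // v01 v23 expr_div_n hr'2 [(Dd' * Q) ^+ 2]exprMn hQ2.
  move: nS0 nS2; rewrite /S0 /S2 => nS0 nS2.
  by field; rewrite nD nD' nXX nYY.
have PS : sD * sA = r / (Dd * Q).
  apply: sq_eq; first by rewrite mulr_ge0 ?sqrtr_ge0.
    by rewrite divr_ge0 ?ltW // mulr_gt0.
  rewrite exprMn /sD /sA !sqr_sqrtr // v01 v23 expr_div_n hr2 [(Dd * Q) ^+ 2]exprMn hQ2.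
  move: nS0 nS2; rewrite /S0 /S2 => nS0 nS2.
  by field; rewrite nD nD' nXX nYY.
have nam : am != 0 by rewrite Eam gt_eqF // addr_gt0 // mulr_gt0.
have Eam' : am = (r + r') / 4 by rewrite Eam /r /r'; field.
have Eap' : ap = (r - r') / 4 by rewrite Eap /r /r'; field.
have Eb' : b = (Z + Z') / 4 by rewrite Eb /Z /Z'; field.
have Ec' : c = (Z - Z') / 4 by rewrite Ec /Z /Z'; field.
have EAm' : Am = r' / ((r' ^+ 2 - Z' ^+ 2) * Q) + r / ((r ^+ 2 - Z ^+ 2) * Q).
  by rewrite EAm PD PS hDd hDd'.
have EAp' : Ap = r' / ((r' ^+ 2 - Z' ^+ 2) * Q) - r / ((r ^+ 2 - Z ^+ 2) * Q).
  by rewrite EAp mulrC PD (mulrC sA) PS hDd hDd'.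
have EcB' : cB = (Z / (r ^+ 2 - Z ^+ 2) + Z' / (r' ^+ 2 - Z' ^+ 2)) / Q.
  by rewrite EcB v13 -hDd -hDd' mulNr opprK.
have EcC' : cC = (Z / (r ^+ 2 - Z ^+ 2) - Z' / (r' ^+ 2 - Z' ^+ 2)) / Q.
  by rewrite EcC v12 -hDd -hDd' -mulNr opprD opprK.
have hZ : Z ^+ 2 < r ^+ 2 by rewrite -subr_gt0 -hDd.
have hZ' : Z' ^+ 2 < r' ^+ 2 by rewrite -subr_gt0 -hDd'.
have [[l0p [l1p [l2p l3p]]] [Ig1 [Ig2 Ig3]]] :=
  @core _ _ _ _ _ _ _ _ _ _ _ _ _ _ hrp hrp' hZ hZ' hQ Eam' Eap' Eb' Ec' EAm' EAp' EcB' EcC'.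
move: l0p l1p l2p l3p Ig1 Ig2 Ig3.
set l0 := 1 + ap / am + b / am + c / am.
set l1 := 1 + ap / am - b / am - c / am.
set l2 := 1 - ap / am + b / am - c / am.
set l3 := 1 - ap / am - b / am + c / am.
move=> l0p l1p l2p l3p Ig1 Ig2 Ig3.
have Tp : 0 <= l0^-1 + l1^-1 + l2^-1 + l3^-1.
  by rewrite !addr_ge0 // invr_ge0 ltW.
have es0 : Num.sqrt l0 ^+ 2 = l0 by rewrite sqr_sqrtr // ltW.
have es1 : Num.sqrt l1 ^+ 2 = l1 by rewrite sqr_sqrtr // ltW.
have es2 : Num.sqrt l2 ^+ 2 = l2 by rewrite sqr_sqrtr // ltW.
have es3 : Num.sqrt l3 ^+ 2 = l3 by rewrite sqr_sqrtr // ltW.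
have eN : Num.sqrt (l0^-1 + l1^-1 + l2^-1 + l3^-1) ^+ 2 = l0^-1 + l1^-1 + l2^-1 + l3^-1.
  by rewrite sqr_sqrtr.
have Np : 0 < Num.sqrt (l0^-1 + l1^-1 + l2^-1 + l3^-1).
  by rewrite sqrtr_gt0 !addr_gt0 // invr_gt0.
have hsum : Num.sqrt l0 ^+ 2 + Num.sqrt l1 ^+ 2 + Num.sqrt l2 ^+ 2 + Num.sqrt l3 ^+ 2 = 4.
  by rewrite es0 es1 es2 es3 /l0 /l1 /l2 /l3; ring.
have hN2 : Num.sqrt (l0^-1 + l1^-1 + l2^-1 + l3^-1) ^+ 2 =
    Num.sqrt l0 ^- 2 + Num.sqrt l1 ^- 2 + Num.sqrt l2 ^- 2 + Num.sqrt l3 ^- 2.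
  by rewrite eN es0 es1 es2 es3.
have s0p : 0 < Num.sqrt l0 by rewrite sqrtr_gt0.
have s1p : 0 < Num.sqrt l1 by rewrite sqrtr_gt0.
have s2p : 0 < Num.sqrt l2 by rewrite sqrtr_gt0.
have s3p : 0 < Num.sqrt l3 by rewrite sqrtr_gt0.
have [q [Hq1 [Hq2 Hq3]]] := @build_sym _ _ _ _ _ _ s0p s1p s2p s3p Np hN2 hsum.
move: Hq2 Hq3; rewrite eN es0 es1 es2 es3 -Ig1 -Ig2 -Ig3 => Hq2 Hq3.
exists q; split => //; split => //.
rewrite Hq3; congr sym_pattern; by rewrite /l0 /l1 /l2 /l3; field.
Qed.
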